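(* Let $\mathcal Q_{bin}$ be the collection of all probability measures $\mu$ on $\{0,1\}^{\mathbb N}$ with $\mathrm{Mean}(\mu)\in\{0,1\}^{\mathbb N}$. Then $\mathcal Q_{bin}$ is non-separable in its means, and $\mathcal Q_{bin}$ is UME-learnable.
   Context: $\{0,1\}^{\mathbb N}$ carries the product $\sigma$-algebra. For a probability measure $\mu$ on $\{0,1\}^{\mathbb N}$, $\mathrm{Mean}(\mu)\in[0,1]^{\mathbb N}$ is the vector whose $j$-th coordinate is $\mathbb E[X_j]$ for $X\sim\mu$; $\mathrm{Mean}(\mathcal Q)=\{\mathrm{Mean}(\mu):\mu\in\mathcal Q\}$. A countable $\varepsilon$-cover of $\mathrm{Mean}(\mathcal Q)$ is a countable set $C\subset[0,1]^{\mathbb N}$ such that every $q\in\mathrm{Mean}(\mathcal Q)$ has some $p\in C$ with $\|q-p\|_\infty<\varepsilon$. $\mathcal Q$ is separable in its means if for every $\varepsilon>0$ a countable $\varepsilon$-cover exists, and non-separable in its means otherwise. $\mathcal Q$ is UME-learnable if there exist (measurable) estimators $\mathcal A_n:(\{0,1\}^{\mathbb N})^n\to[0,1]^{\mathbb N}$ such that for every $\mu\in\mathcal Q$, $\mathbb E_{S\sim\mu^n}\|\mathcal A_n(S)-\mathrm{Mean}(\mu)\|_\infty\to0$ as $n\to\infty$, where $S$ consists of $n$ i.i.d. draws from $\mu$. *)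

(* Defs.v *)
From HB Require Import structures.
From mathcomp Require Import all_boot all_order all_algebra.
From mathcomp Require Import all_classical all_reals all_analysis.
Unset Printing Implicit Defensive.
Import Order.TTheory GRing.Theory Num.Theory.
Local Open Scope classical_set_scope.
Local Open Scope ring_scope.

(* Generators of the product sigma-algebra on {0,1}^N: coordinate cylinders. *)
Definition cube_cyl : set (set (nat -> bool)) :=
  fun A => exists (j : nat) (b : bool), A = [set x | x j = b].

Definition Cube := g_sigma_algebraType cube_cyl.

(* Generators of the product sigma-algebra on ({0,1}^N)^n. *)
Definition sample_cyl (n : nat) : set (set ('I_n -> nat -> bool)) :=
  fun A => exists (i : 'I_n) (j : nat) (b : bool), A = [set S | S i j = b].

Definition Sample (n : nat) := g_sigma_algebraType (sample_cyl n).

Definition scons n (x : nat -> bool) (s : 'I_n -> nat -> bool) :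
  'I_n.+1 -> nat -> bool :=
  fun i => if unlift ord0 i is Some k then s k else x.

(* E_{S ~ mu^n}[f S], for nonnegative f, written as the iterated
   (Tonelli) integral over the n i.i.d. coordinates of the sample. *)
Fixpoint iid_expect {R : realType} (mu : probability Cube R) (n : nat) :
  (('I_n -> nat -> bool) -> \bar R) -> \bar R :=
  match n with
  | 0 => fun f => f (fun _ _ => false)
  | m.+1 => fun (f : (('I_m.+1 -> nat -> bool) -> \bar R)) => (\int[mu]_x iid_expect mu m (fun s => f (@scons m x s)))%E
  end.

Definition Mean {R : realType} (mu : probability Cube R) : nat -> R :=
  fun j => fine (\int[mu]_x ((x j)%:R)%:E)%E.

Definition MeanSet {R : realType} (Q : set (probability Cube R)) : set (nat -> R) :=
  [set Mean mu | mu in Q].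

Definition supnorm {R : realType} (v : nat -> R) : \bar R :=
  ereal_sup (range (fun j => (`|v j|)%:E)).

Definition separable_in_means {R : realType} (Q : set (probability Cube R)) : Prop :=
  forall eps : R, 0 < eps ->
    exists C : set (nat -> R),
      countable C /\ (forall p, C p -> forall j, 0 <= p j <= 1) /\
      (forall q, MeanSet Q q -> exists p, C p /\ (supnorm (fun j => (q j - p j)%R) < eps%:E)%E).

Definition UME_learnable {R : realType} (Q : set (probability Cube R)) : Prop :=
  exists A : forall n : nat, Sample n -> (nat -> R),
    (forall n j, measurable_fun setT (fun S : Sample n => A n S j)) /\
    (forall n S j, 0 <= A n S j <= 1) /\
    (forall mu, Q mu ->
       (fun n => iid_expect mu n (fun S => supnorm (fun j => (A n S j - Mean mu j)%R))) @ \oo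
         --> 0%E).

Definition Qbin (R : realType) : set (probability Cube R) :=
  [set mu | forall j, Mean mu j = 0 \/ Mean mu j = 1].

(* Main.v *)
Require Import Defs.
From HB Require Import structures.
From mathcomp Require Import all_boot all_order all_algebra.
From mathcomp Require Import all_classical all_reals all_analysis.
Import Order.TTheory GRing.Theory Num.Theory.
Local Open Scope classical_set_scope.
Local Open Scope ring_scope.

Lemma cyl_meas j b : measurable ([set x | x j = b] : set Cube).
Proof. apply: sub_sigma_algebra; by exists j, b. Qed.

Lemma Mean_E (R : realType) (mu : probability Cube R) j :
  Mean mu j = fine (mu [set x | x j = true]).
Proof.
rewrite /Mean.
rewrite (_ : (fun x : Cube => ((x j)%:R)%:E) = (fun x => (\1_[set x : Cube | x j = true] x)%:E)); last first.
  apply/funext => x; rewrite /indic /=; congr (_%:E); case E: (x j).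
    by rewrite mem_set.
  by rewrite memNset //= E.
by rewrite (@integral_indic _ _ _ mu setT) ?setIT //; apply: cyl_meas.
Qed.

Lemma no_inj_nat (h : (nat -> bool) -> nat) : injective h -> False.
Proof.
move=> ih.
pose d n := ~~ `[< exists b, h b = n /\ b n = true >].
have : d (h d) = ~~ d (h d).
  rewrite {1}/d; congr (~~ _); apply/asboolP; case E: (d (h d)).
    by exists d.
  by move=> [b [/ih -> ]]; rewrite E.
by case: (d (h d)).
Qed.

Lemma Mean_dirac (R : realType) (b : nat -> bool) j :
  Mean (@dirac _ Cube b R : probability Cube R) j = (b j)%:R.
Proof.
rewrite Mean_E /= /indic; case E: (b j).
  by rewrite mem_set.
by rewrite memNset //= E.
Qed.

Lemma not_sep (R : realType) : ~ separable_in_means (Qbin R).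
Proof.
move=> /(_ (1/2)) [].
  by rewrite divr_gt0.
move=> C [cC [_ cov]].
have /choice [g hg] : forall b : nat -> bool, exists p, C p /\
    (supnorm (fun j => ((b j)%:R - p j)%R) < (1/2)%:E)%E.
  move=> b; have := cov (fun j => (b j)%:R); case.
    exists (@dirac _ Cube b R : probability Cube R) => //.
      by move=> j; rewrite Mean_dirac; case: (b j); [right|left].
    by apply/funext => j; rewrite Mean_dirac.
  by move=> p hp; exists p.
move/countable_injP: cC => [f injf].
apply: (@no_inj_nat (fun b => f (g b))).
move=> b b' /injf => E.
have gE : g b = g b' by apply: E; rewrite inE; [exact: (hg b).1 | exact: (hg b').1].
apply/funext => j; apply/eqP; apply/negPn/negP => nbj.
have lt1 : forall c : nat -> bool, `|(c j)%:R - g c j| < 1/2 :> R.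
  move=> c; rewrite -lte_fin; apply: le_lt_trans (hg c).2.
  by apply: ereal_sup_ubound; exists j.
have := lt1 b; have := lt1 b'; rewrite -gE => h1 h2.
have : `|(b j)%:R - (b' j)%:R| < 1 :> R.
  apply: (le_lt_trans (ler_distD (g b j) _ _)).
  apply: (lt_le_trans (ltrD h2 _)); first by rewrite distrC; exact: h1.
  by rewrite -splitr.
by move: nbj; case: (b j); case: (b' j); rewrite //= ?subr0 ?sub0r ?normrN normr1 ltxx.
Qed.

Lemma meas_bool d (T : measurableType d) (R : realType) (P : T -> bool) :
  measurable [set x | P x] -> measurable_fun setT (fun x => (P x)%:R : R).
Proof.
move=> mP _ B mB; rewrite setTI.
have mnP : measurable [set x | ~~ P x].
  rewrite (_ : [set x | ~~ P x] = ~` [set x | P x]); first exact: measurableC.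
  by apply/seteqP; split => x /=; case: (P x).
have [B1|B1] := pselect (B 1); have [B0|B0] := pselect (B 0).
- rewrite (_ : _ @^-1` _ = setT) //; apply/seteqP; split => x //= _; by case: (P x).
- rewrite (_ : _ @^-1` _ = [set x | P x]) //; apply/seteqP; split => x /=;
    by case: (P x).
- rewrite (_ : _ @^-1` _ = [set x | ~~ P x]) //; apply/seteqP; split => x /=;
    by case: (P x).
- rewrite (_ : _ @^-1` _ = set0) //; apply/seteqP; split => x //=; by case: (P x).
Qed.

Lemma iid_const (R : realType) (mu : probability Cube R) n (r : \bar R) :
  iid_expect mu n (fun _ => r) = r.
Proof.
elim: n => [//|n IH] /=; rewrite IH.
rewrite (integral_cst mu (measurableT)) [X in (_ * X)%E](_ : _ = 1%E) ?mule1 //; exact: probability_setT.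
Qed.

Lemma scons0 n x s : @scons n x s ord0 = x.
Proof. by rewrite /scons unlift_none. Qed.

Definition Aest (R : realType) : forall n, Sample n -> nat -> R :=
  fun n => match n with 0 => fun _ _ => 0 | n'.+1 => fun S j => (S ord0 j)%:R end.

Section Qb.
Variable R : realType.
Variable mu : probability Cube R.
Hypothesis hmu : Qbin R mu.
Let m j := Mean mu j == 1.
Let E := [set x : Cube | forall j, x j = m j].

Lemma MeanM j : Mean mu j = (m j)%:R.
Proof. by rewrite /m; case: (hmu j) => ->; rewrite ?eqxx // eq_sym oner_eq0. Qed.

Lemma mE : measurable E.
Proof.
rewrite (_ : E = \bigcap_j [set x : Cube | x j = m j]).
  by apply: bigcapT_measurable => j; exact: cyl_meas.
by apply/seteqP; split => x /= h j; [move=> _; exact: (h j) | exact: (h j I)].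
Qed.

Lemma supnormE (x : Cube) :
  supnorm (fun j => ((x j)%:R - Mean mu j)%R) = (\1_(~` E) x)%:E.
Proof.
have tE j : `|(x j)%:R - Mean mu j| = (x j != m j)%:R :> R.
  by rewrite MeanM; case: (x j); case: (m j); rewrite //= ?subrr ?subr0 ?sub0r ?normr0 ?normrN ?normr1.
rewrite /supnorm /indic; have [xE|xE] := pselect (E x).
  rewrite memNset /=; last by move=> /(_ xE).
  apply/le_anti/andP; split.
    apply: ge_ereal_sup => _ [j _ <-]; by rewrite tE xE eqxx.
  by apply: ereal_sup_ubound; exists 0%N => //; rewrite tE xE eqxx.
rewrite mem_set //=.
have [j xj] : exists j, x j != m j.
  apply/not_existsP => hn; apply: xE => j; apply/eqP/negPn/negP; exact: hn.
apply/le_anti/andP; split.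
  apply: ge_ereal_sup => _ [k _ <-]; rewrite tE lee_fin; by case: (x k != m k).
by apply: ereal_sup_ubound; exists j => //; rewrite tE xj.
Qed.

Lemma fineP (A : set Cube) : measurable A -> mu A = (fine (mu A))%:E.
Proof. by move=> mA; rewrite fineK // fin_num_measure. Qed.

Lemma null_notE : mu (~` E) = 0%E.
Proof.
pose F j := [set x : Cube | x j = ~~ m j].
have F0 j : mu (F j) = 0%E.
  have := MeanM j; rewrite Mean_E /F.
  case: (m j) => /= h.
    rewrite (_ : [set x : Cube | x j = false] = ~` [set x | x j = true]); last first.
      by apply/seteqP; split => x /=; case: (x j).
    rewrite (probability_setC _ (cyl_meas j true)) (fineP _ (cyl_meas j true)) h.
    by rewrite subee.
  by rewrite (fineP _ (cyl_meas j true)) h.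
apply/le_anti/andP; split; last exact: measure_ge0.
apply: le_trans (measure_sigma_subadditive mu (A := ~` E) (F := F) _ _ _) _.
- by move=> j; exact: cyl_meas.
- apply: measurableC; exact: mE.
- move=> x /= xE; have [j xj] : exists j, x j != m j.
    by apply/not_existsP => hn; apply: xE => j; apply/eqP/negPn/negP; exact: hn.
  by exists j => //; rewrite /F /=; move: xj; case: (x j); case: (m j).
- by rewrite eseries0 // => i _ _; exact: F0.
Qed.

Lemma conv0 :
  (fun n => iid_expect mu n (fun S => supnorm (fun j => (Aest R n S j - Mean mu j)%R))) @ \oo
         --> 0%E.
Proof.
apply: cvg_near_cst; exists 1%N => // [[|n]] //= _.
transitivity (\int[mu]_x (\1_(~` E) x)%:E)%E.
  apply: eq_integral => x _.
  rewrite -(@iid_const R mu n ((\1_(~` E) x)%:E)); congr (iid_expect _ _ _).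
  by apply/funext => s; rewrite scons0 supnormE.
rewrite integral_indic //; first by rewrite setIT; exact: null_notE.
exact: (measurableC mE).
Qed.

End Qb.

Lemma ume (R : realType) : UME_learnable (Qbin R).
Proof.
exists (@Aest R); split; [|split].
- move=> [|n] j /=; first exact: measurable_cst.
  apply: (@meas_bool _ _ R (fun S : Sample n.+1 => S ord0 j)).
  by apply: sub_sigma_algebra; exists ord0, j, true.
- move=> [|n] S j /=; first by rewrite lexx ler01.
  by case: (S ord0 j); rewrite /= ?lexx ?ler01.
- by move=> mu hmu; exact: conv0.
Qed.

Theorem mainTheorem5 (R : realType) :
  ~ separable_in_means (Qbin R) /\ UME_learnable (Qbin R).
Proof. split; [exact: not_sep | exact: ume]. Qed.
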